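(* Let $A_m(x)=R_{2m}(x)$ and $B_m(x)=R_{2m+1}(x)$. For every integer $m\ge 3$, \[ A_m(x)=(1+x+x^2)A_{m-1}(x)-x^2A_{m-2}(x),\qquad B_m(x)=(1+x+x^2)B_{m-1}(x)-x^2B_{m-2}(x). \]
   Context: For $n\ge1$ let $\Xi_n$ be the poset on $\{x_1,\dots,x_n\}$ whose cover relations are exactly: $x_2\prec x_1$, $x_3\prec x_2$, and for $3\le i\le n-1$, $x_i\prec x_{i+1}$ if $i$ is odd and $x_{i+1}\prec x_i$ if $i$ is even (so $x_1>x_2>x_3<x_4>x_5<\cdots$). A filter of a poset is an up-closed subset. $\Omega_n$ is the lattice of filters of $\Xi_n$ under reverse inclusion; $\Omega_0$ is the one-element lattice. $R_n(x)=\sum_{F\in\Omega_n}x^{\,n-|F|}$ is the rank generating function of $\Omega_n$, with $R_0(x)=1$. *)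

(* Defs.v *)
From mathcomp Require Import all_boot all_order all_algebra.
Set Implicit Arguments. Unset Strict Implicit. Unset Printing Implicit Defensive.
Import GRing.Theory.
Local Open Scope ring_scope.

(* The element x_{i+1} of Xi_n is represented by (i : 'I_n). *)

(* xi_cov n a b : x_{a+1} is covered by x_{b+1}, i.e. x_{a+1} ≺ x_{b+1}. *)
Definition xi_cov (n : nat) : rel 'I_n := fun a b =>
  let i := (a : nat).+1 in let j := (b : nat).+1 in
  [|| (i == 2%N) && (j == 1%N),
      (i == 3%N) && (j == 2%N),
      [&& (3 <= i)%N, (i.+1 == j)%N & odd i]
    | [&& (3 <= j)%N, (j.+1 == i)%N & ~~ odd j] ].

Definition xi_le (n : nat) (a b : 'I_n) : bool := connect (@xi_cov n) a b.

Definition is_filter (n : nat) (F : {set 'I_n}) : bool :=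
  [forall a, forall b, (a \in F) && xi_le a b ==> (b \in F)].

(* Rank generating function of Omega_n (filters under reverse inclusion). *)
Definition R (n : nat) : {poly int} :=
  \sum_(F : {set 'I_n} | is_filter F) 'X^(n - #|F|).

Definition A (m : nat) : {poly int} := R (2 * m).
Definition B (m : nat) : {poly int} := R (2 * m + 1).

(* Main.v *)
Require Import Defs.
From mathcomp Require Import all_boot all_order all_algebra.
From mathcomp Require Import zify ring.
Set Implicit Arguments. Unset Strict Implicit. Unset Printing Implicit Defensive.
Import GRing.Theory.
Local Open Scope ring_scope.

Definition fm n (F : {set 'I_n}) (k : nat) : bool := [exists i in F, val i == k].

Lemma fmE n (F : {set 'I_n}) (i : 'I_n) : fm F i = (i \in F).
Proof.
apply/existsP/idP => [[j /andP[jF /eqP/val_inj <-]] //|iF].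
by exists i; rewrite iF eqxx.
Qed.

Lemma fm_ge n (F : {set 'I_n}) k : (n <= k)%N -> fm F k = false.
Proof.
move=> nk; apply/existsP => -[j /andP[_ /eqP jk]].
by have := ltn_ord j; rewrite jk ltnNge nk.
Qed.

Lemma fm_inj n (F G : {set 'I_n}) : fm F =1 fm G -> F = G.
Proof. by move=> h; apply/setP => i; rewrite -!fmE h. Qed.

Lemma fmN n (F : {set 'I_n}) k (h : (k < n)%N) : fm F k = (Ordinal h \in F).
Proof. by rewrite -fmE. Qed.

Definition ext n (F : {set 'I_n}) (b : bool) : {set 'I_n.+1} :=
  [set i : 'I_n.+1 | if val i == n then b else fm F i].
Definition restr n (F : {set 'I_n.+1}) : {set 'I_n} := [set j : 'I_n | fm F j].

Lemma fm_ext n (F : {set 'I_n}) b k : fm (ext F b) k = if k == n then b else fm F k.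
Proof.
case: (ltnP k n.+1) => hk.
  by rewrite (fmN _ hk) inE.
rewrite !fm_ge //; last exact: ltnW.
by rewrite gtn_eqF.
Qed.

Lemma fm_restr n (F : {set 'I_n.+1}) k : fm (restr F) k = (k < n)%N && fm F k.
Proof.
case: (ltnP k n) => hk /=; first by rewrite (fmN _ hk) inE.
by rewrite fm_ge.
Qed.

Lemma restr_ext n (F : {set 'I_n}) b : restr (ext F b) = F.
Proof.
apply: fm_inj => k; rewrite fm_restr fm_ext.
case: (ltnP k n) => hk /=; first by rewrite ltn_eqF.
by rewrite fm_ge.
Qed.

Lemma ext_restr n (F : {set 'I_n.+1}) : ext (restr F) (fm F n) = F.
Proof.
apply: fm_inj => k; rewrite fm_ext fm_restr.
case: eqP => [-> //|kn].
case: (ltnP k n) => hk //=.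
by rewrite fm_ge //; lia.
Qed.

Lemma card_fm n (F : {set 'I_n}) : #|F| = (\sum_(i < n) fm F i)%N.
Proof.
rewrite -sum1_card big_mkcond /=; apply: eq_bigr => i _.
by rewrite fmE; case: (i \in F).
Qed.

Lemma card_ext n (F : {set 'I_n}) b : #|ext F b| = (#|F| + b)%N.
Proof.
rewrite !card_fm big_ord_recr /= fm_ext eqxx; congr (_ + _)%N.
apply: eq_bigr => i _; rewrite fm_ext /= ltn_eqF //.
Qed.

Lemma split_sum (V : nmodType) n (H : {set 'I_n.+1} -> V) :
  \sum_(G : {set 'I_n.+1}) H G = \sum_(F : {set 'I_n}) \sum_(b : bool) H (ext F b).
Proof.
rewrite pair_big /=.
rewrite (reindex (fun p : {set 'I_n} * bool => ext p.1 p.2)) //=.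
apply: onW_bij.
exists (fun G => (restr G, fm G n)).
  by move=> [F b] /=; rewrite restr_ext fm_ext eqxx.
by move=> G /=; rewrite ext_restr.
Qed.

Definition loc (k : nat) (p q : bool) : bool :=
  if (2 <= k)%N && ~~ odd k then p ==> q else q ==> p.

Lemma filter_cov n (F : {set 'I_n}) :
  is_filter F <-> (forall a b : 'I_n, xi_cov a b -> a \in F -> b \in F).
Proof.
split.
  move=> /forallP h a b ab aF.
  by have /forallP/(_ b) := h a; rewrite aF /xi_le connect1.
move=> h; apply/forallP => a; apply/forallP => b; apply/implyP => /andP[aF].
move/connectP => [p pth ->] {b}.
elim: p a aF pth => [|c p IH] a aF //= /andP[ac pth].
exact: IH (h _ _ ac aF) pth.
Qed.

Lemma filter_loc n (F : {set 'I_n}) :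
  is_filter F <-> (forall k, (k.+1 < n)%N -> loc k (fm F k) (fm F k.+1)).
Proof.
rewrite filter_cov; split.
  move=> h k hk.
  have hk0 : (k < n)%N by lia.
  rewrite (fmN _ hk0) (fmN _ hk) /loc.
  case: ifP => [/andP[k2 ko]|hc]; apply/implyP; apply: h; rewrite /xi_cov /=.
    by rewrite ltnS k2 eqxx ko !orbT.
  move: hc; case: k {hk hk0} => [|[|k]] //= hc.
  by rewrite !negbK in hc *; rewrite (negbFE hc) eqxx andbT orbT.
move=> h a b; rewrite /xi_cov /=.
have ha := ltn_ord a; have hb := ltn_ord b.
rewrite -!fmE.
case/or4P.
- case/andP => /eqP [ha1] /eqP [hb0]; rewrite ha1 hb0 in ha *.
  by have := h 0%N ha; rewrite /loc /= => /implyP.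
- case/andP => /eqP [ha1] /eqP [hb0]; rewrite ha1 hb0 in ha *.
  by have := h 1%N ha; rewrite /loc /= => /implyP.
- case/and3P => h3 /eqP [hab] ho; rewrite -hab in hb *.
  have := h a hb; rewrite /loc /=.
  have -> : (2 <= a)%N by lia.
  by rewrite ho /= => /implyP.
- case/and3P => h3 /eqP [hab] ho; rewrite -hab in ha *.
  have := h b ha; rewrite /loc /=.
  by rewrite negbK in ho; rewrite ho andbF => /implyP.
Qed.

Lemma filter_ext n (F : {set 'I_n.+1}) b :
  is_filter (ext F b) = is_filter F && loc n (fm F n) b.
Proof.
apply/idP/andP.
  move/filter_loc => h; split.
    apply/filter_loc => k hk; have := h k; rewrite !fm_ext.
    by rewrite !ltn_eqF //; lia.
  by have := h n; rewrite !fm_ext eqxx ltn_eqF //; apply.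
move=> [/filter_loc h hl]; apply/filter_loc => k hk.
rewrite !fm_ext.
case: (ltnP k.+1 n.+1) => hk2.
  rewrite (ltn_eqF hk2) (ltn_eqF (ltnW hk2)); exact: h.
have -> : k = n by lia.
by rewrite eqxx ltn_eqF.
Qed.

Definition V n (c : bool) : {poly int} :=
  \sum_(F : {set 'I_n.+1} | is_filter F && (fm F n == c)) 'X^(n.+1 - #|F|).

Lemma R_V n : R n.+1 = V n true + V n false.
Proof.
rewrite /R (bigID (fun F => fm F n)) /=; congr (_ + _); apply: eq_bigl => F;
by case: (fm F n); rewrite ?andbT ?andbF.
Qed.

Lemma V_step n c : V n.+1 c = 'X^(~~ c) *
  ((if loc n true c then V n true else 0) + (if loc n false c then V n false else 0)).
Proof.
have E d : (if loc n d c then V n d else 0) = \sum_(F : {set 'I_n.+1})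
    (if is_filter F && (fm F n == d) && loc n d c then 'X^(n.+1 - #|F|) else 0).
  case: (loc n d c); rewrite /V big_mkcond //=.
    by apply: eq_bigr => F _; rewrite andbT.
  by rewrite big1 // => F _; rewrite andbF.
rewrite E E -big_split mulr_sumr /V big_mkcond split_sum /=.
clear E; apply: eq_bigr => F _.
rewrite big_bool /= !filter_ext !fm_ext !eqxx !card_ext.
have hF : (#|F| <= n.+1)%N by have := max_card F; rewrite card_ord.
have e1 : (n.+2 - (#|F| + 1) = n.+1 - #|F|)%N by lia.
have e0 : (n.+2 - (#|F| + 0) = (n.+1 - #|F|).+1)%N by lia.
rewrite /= e1 e0 exprS.
case: c; case: (fm F n); case: (is_filter F);
  case: (loc n true true); case: (loc n true false); case: (loc n false true); case: (loc n false false);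
  rewrite /= ?expr0 ?expr1 ?mulr0 ?mul0r ?mul1r ?add0r ?addr0 //; ring.
Qed.

Lemma loc_odd n d c : odd n -> loc n d c = c ==> d.
Proof. by move=> h; rewrite /loc h andbF. Qed.

Lemma loc_even n d c : odd n -> loc n.+1 d c = d ==> c.
Proof.
move=> h; rewrite /loc /= h /= andbT.
by case: n h => [|n] //.
Qed.

Lemma S1t n : odd n -> V n.+1 true = V n true.
Proof. by move=> h; rewrite V_step !loc_odd //= expr0 mul1r addr0. Qed.

Lemma S1f n : odd n -> V n.+1 false = 'X * (V n true + V n false).
Proof. by move=> h; rewrite V_step !loc_odd //= expr1. Qed.

Lemma S2t n : odd n -> V n.+2 true = (1 + 'X) * V n true + 'X * V n false.
Proof.
move=> h; rewrite V_step !loc_even //= expr0 mul1r S1t // S1f //; ring.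
Qed.

Lemma S2f n : odd n -> V n.+2 false = 'X^2 * (V n true + V n false).
Proof.
move=> h; rewrite V_step !loc_even //= expr1 add0r S1f //; ring.
Qed.

Theorem mainTheorem3 (m : nat) : (3 <= m)%N ->
  A m = (1 + 'X + 'X^2) * A m.-1 - 'X^2 * A m.-2 /\
  B m = (1 + 'X + 'X^2) * B m.-1 - 'X^2 * B m.-2.
Proof.
case: m => [|[|[|k]]] // _ /=.
set n0 := (2 * k).+1.
have o0 : odd n0 by rewrite /n0 /= oddM.
have o2 : odd n0.+2 by rewrite /= !negbK.
have o4 : odd n0.+4 by rewrite /= !negbK.
have eA0 : (2 * k.+1 = n0.+1)%N by rewrite /n0; lia.
have eA1 : (2 * k.+2 = n0.+3)%N by rewrite /n0; lia.
have eA2 : (2 * k.+3 = n0.+4.+1)%N by rewrite /n0; lia.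
rewrite /A /B eA0 eA1 eA2 !addn1 !R_V.
rewrite (S1t o0) (S1f o0) (S1t o2) (S1f o2) (S1t o4) (S1f o4).
rewrite (S2t o2) (S2f o2) (S2t o0) (S2f o0).
split; ring.
Qed.
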